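(* Let $n,m_A,m_B>0$ be integers, $A,B$ quantum systems of dimensions $m_A,m_B$, and $\psi_{AB}$ a bipartite state with $\psi_A=\mathrm{id}_{m_A}/m_A$ and $\psi_B=\mathrm{id}_{m_B}/m_B$; let $\rho=\rho(\psi_{AB})$ and let $\mathcal{T}:\mathcal{M}(B^n)\to\mathcal{M}(A^n)$ be the Markov super-operator with respect to $\psi_{AB}^{\otimes n}$. Then for every $Q\in\mathcal{M}(B^n)$ and $S\subseteq[n]$, $$\|\mathcal{T}(Q[S])\|'_2\le\rho^{|S|}\|Q[S]\|'_2.$$
   Context: On $\mathcal{M}(A^n)$ use $\langle X,Y\rangle=\frac1{m_A^n}\mathrm{Tr}X^\dagger Y$ and on $\mathcal{M}(B^n)$ use $\frac1{m_B^n}\mathrm{Tr}X^\dagger Y$; $\|X\|'_2=\langle X,X\rangle^{1/2}$. The Markov super-operator is defined by $\mathrm{Tr}((M^\dagger\otimes Q)\psi_{AB}^{\otimes n})=\langle M,\mathcal{T}(Q)\rangle$ for all $M,Q$. Maximal correlation: $\rho(\psi_{AB})=\sup\{|\mathrm{Tr}((P^\dagger\otimes Q)\psi_{AB})|:\mathrm{Tr}P=\mathrm{Tr}Q=0,\ \tfrac1{m_A}\mathrm{Tr}P^\dagger P=\tfrac1{m_B}\mathrm{Tr}Q^\dagger Q=1\}$. A standard orthonormal basis of $\mathcal{M}_k$ is an orthonormal basis (for $\frac1k\mathrm{Tr}X^\dagger Y$) of Hermitian matrices $\mathcal{B}_0=\mathrm{id}_k,\mathcal{B}_1,\ldots,\mathcal{B}_{k^2-1}$;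 with $\mathcal{B}_\sigma=\bigotimes_i\mathcal{B}_{\sigma_i}$ and $Q=\sum_\sigma\widehat Q(\sigma)\mathcal{B}_\sigma$, the Efron–Stein component is $Q[S]=\sum_{\sigma:\{i:\sigma_i\ne0\}=S}\widehat Q(\sigma)\mathcal{B}_\sigma$ (basis-independent). *)

(* Defs.v *)
From HB Require Import structures.
From mathcomp Require Import all_boot all_order all_algebra.
From mathcomp Require Import classical_sets reals.
From mathcomp.real_closed Require Import complex.
Set Implicit Arguments. Unset Strict Implicit. Unset Printing Implicit Defensive.
Import Order.TTheory GRing.Theory Num.Theory.
Local Open Scope ring_scope.

Section Defs.
Variable R : realType.
Local Notation C := R[i].

(* Linear operators (matrices) on the Hilbert space C^I, I a finite index set
   (computational basis). *)
Definition op (I : finType) := I -> I -> C.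

Definition trace (I : finType) (X : op I) : C := \sum_(i : I) X i i.
Definition mulop (I : finType) (X Y : op I) : op I :=
  fun i j => \sum_(k : I) X i k * Y k j.
Definition adj (I : finType) (X : op I) : op I := fun i j => (X j i)^*.
Definition idop (I : finType) : op I := fun i j => (i == j)%:R.
Definition herm (I : finType) (X : op I) : Prop := forall i j, X j i = (X i j)^*.

Definition tens (I J : finType) (X : op I) (Y : op J) : op (I * J)%type :=
  fun x y => X x.1 y.1 * Y x.2 y.2.

Definition innerN (I : finType) (X Y : op I) : C :=
  (#|I|%:R)^-1 * trace (mulop (adj X) Y).
Definition norm2 (I : finType) (X : op I) : R :=
  Num.sqrt (complex.Re (innerN X X)).

Definition psd (I : finType) (X : op I) : Prop :=
  forall v : I -> C, 0 <= \sum_(i : I) \sum_(j : I) (v i)^* * X i j * v j.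
Definition density (I : finType) (X : op I) : Prop :=
  [/\ herm X, psd X & trace X = 1].

Definition marginalA (mA mB : nat) (psi : op ('I_mA * 'I_mB)%type) : op 'I_mA :=
  fun a a' => \sum_(b : 'I_mB) psi (a, b) (a', b).
Definition marginalB (mA mB : nat) (psi : op ('I_mA * 'I_mB)%type) : op 'I_mB :=
  fun b b' => \sum_(a : 'I_mA) psi (a, b) (a, b').

(* Multi-indices for n copies of an m-dimensional system: C^(m^n). *)
Definition idx (n m : nat) := {ffun 'I_n -> 'I_m}.

(* psi_AB^{(x) n}, as an operator on A^n B^n (systems reordered as A^n B^n). *)
Definition tenspow (n mA mB : nat) (psi : op ('I_mA * 'I_mB)%type)
  : op (idx n mA * idx n mB)%type :=
  fun x y => \prod_(i < n) psi (x.1 i, x.2 i) (y.1 i, y.2 i).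

Definition markov_op (n mA mB : nat) (psi : op ('I_mA * 'I_mB)%type)
  (T : op (idx n mB) -> op (idx n mA)) : Prop :=
  forall (M : op (idx n mA)) (Q : op (idx n mB)),
    trace (mulop (tens (adj M) Q) (@tenspow n mA mB psi)) = innerN M (T Q).

Definition corr_values (mA mB : nat) (psi : op ('I_mA * 'I_mB)%type) : set R :=
  [set r : R | exists (P : op 'I_mA) (Q : op 'I_mB),
     [/\ trace P = 0, trace Q = 0, innerN P P = 1, innerN Q Q = 1 &
         r = complex.Re `| trace (mulop (tens (adj P) Q) psi) | ] ].
Definition maxcorr (mA mB : nat) (psi : op ('I_mA * 'I_mB)%type) : R :=
  sup (corr_values psi).

Definition std_basis (k : nat) (Bs : 'I_(k * k) -> op 'I_k) : Prop :=
  [/\ forall s : 'I_(k * k), val s = 0%N -> Bs s = @idop 'I_k,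
      forall s, herm (Bs s) &
      forall s t, innerN (Bs s) (Bs t) = (s == t)%:R].

Definition basis_tens (n k : nat) (Bs : 'I_(k * k) -> op 'I_k)
  (sigma : {ffun 'I_n -> 'I_(k * k)}) : op (idx n k) :=
  fun x y => \prod_(i < n) Bs (sigma i) (x i) (y i).

Definition es_comp (n k : nat) (Bs : 'I_(k * k) -> op 'I_k)
  (Q : op (idx n k)) (S : {set 'I_n}) : op (idx n k) :=
  fun x y => \sum_(sigma : {ffun 'I_n -> 'I_(k * k)} |
                   [set i | val (sigma i) != 0%N] == S)
               innerN (basis_tens Bs sigma) Q * basis_tens Bs sigma x y.

End Defs.

(* Main.v *)
Require Import Defs.
From HB Require Import structures.
From mathcomp Require Import all_boot all_order all_algebra.
From mathcomp Require Import classical_sets reals.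
From mathcomp.real_closed Require Import complex.
From mathcomp Require Import ring lra.
Import Order.TTheory GRing.Theory Num.Theory.
Set Implicit Arguments. Unset Strict Implicit. Unset Printing Implicit Defensive.
Local Open Scope ring_scope.


Lemma sum_ind (C : pzRingType) (I : finType) (j : I) (F : I -> C) :
  \sum_i (i == j)%:R * F i = F j.
Proof.
rewrite (bigD1 j) //= eqxx mul1r big1 ?addr0 // => i /negbTE ->; by rewrite mul0r.
Qed.

Lemma CS (C : numClosedFieldType) (I : finType) (a b : I -> C) :
  (\sum_i (a i)^* * b i) * (\sum_i (a i)^* * b i)^* <=
  (\sum_i a i * (a i)^*) * (\sum_i b i * (b i)^*).
Proof.
set z := \sum_i _; set A := \sum_i _; set B := \sum_i b i * _.
have B0 : 0 <= B by apply: sumr_ge0 => i _; exact: mul_conjC_ge0.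
have A0 : 0 <= A by apply: sumr_ge0 => i _; exact: mul_conjC_ge0.
have [Bz|Bnz] := eqVneq B 0.
  have bz i : b i = 0.
    apply/eqP; rewrite -mul_conjC_eq0; apply/eqP.
    by apply: (psumr_eq0P _ Bz) => // j _; exact: mul_conjC_ge0.
  have -> : z = 0 by rewrite /z big1 // => i _; rewrite bz mulr0.
  by rewrite mul0r Bz mulr0.
have Bpos : 0 < B by rewrite lt_def Bnz B0.
have BJ : B^* = B by rewrite geC0_conj.
have key : 0 <= \sum_i (B * a i - z^* * b i) * (B * a i - z^* * b i)^*.
  by apply: sumr_ge0 => i _; exact: mul_conjC_ge0.
have E : \sum_i (B * a i - z^* * b i) * (B * a i - z^* * b i)^* =
   B * (B * A - z * z^*).
  have zJ : z^* = \sum_i a i * (b i)^*.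
    rewrite /z rmorph_sum; apply: eq_bigr => i _; by rewrite rmorphM /= conjCK mulrC.
  transitivity (\sum_i (B * B * (a i * (a i)^*) - B * z * (a i * (b i)^*)
        - B * z^* * ((a i)^* * b i) + z * z^* * (b i * (b i)^*))).
    apply: eq_bigr => i _; rewrite rmorphB !rmorphM /= BJ conjCK; ring.
  rewrite !big_split /= !sumrN -!mulr_sumr -zJ.
  rewrite -/A -/B -/z; ring.
rewrite E in key.
rewrite -subr_ge0; rewrite pmulr_rge0 // in key.
by rewrite mulrC.
Qed.
Definition fcons (I : finType) n (s : I) (g : {ffun 'I_n -> I}) : {ffun 'I_n.+1 -> I} :=
  [ffun i => if unlift ord0 i is Some j then g j else s].

Lemma fcons0 (I : finType) n s (g : {ffun 'I_n -> I}) : fcons s g ord0 = s.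
Proof. by rewrite ffunE unlift_none. Qed.

Lemma fconsS (I : finType) n s (g : {ffun 'I_n -> I}) j : fcons s g (lift ord0 j) = g j.
Proof. by rewrite ffunE liftK. Qed.

Lemma sum_ffunS (C : nmodType) (I : finType) n (F : {ffun 'I_n.+1 -> I} -> C) :
  \sum_f F f = \sum_(s : I) \sum_(g : {ffun 'I_n -> I}) F (fcons s g).
Proof.
rewrite pair_big /=.
rewrite (reindex (fun p : I * {ffun 'I_n -> I} => fcons p.1 p.2)) //=.
exists (fun f => (f ord0, [ffun j => f (lift ord0 j)])) => [[s g] _|f _] /=.
  rewrite fcons0; congr pair; apply/ffunP => j; by rewrite ffunE fconsS.
apply/ffunP => i; rewrite ffunE; case: unliftP => [j ->|->]; by rewrite ?ffunE.
Qed.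

Definition nrm (C : numClosedFieldType) (x : C) := x * x^*.

Lemma nrm_ge0 (C : numClosedFieldType) (x : C) : 0 <= nrm x.
Proof. exact: mul_conjC_ge0. Qed.

Lemma tens_bound (C : numClosedFieldType) (I : finType) n
  (K : 'I_n -> I -> I -> C) (lam : 'I_n -> C) :
  (forall i, 0 <= lam i) ->
  (forall i (v : I -> C), \sum_s nrm (\sum_s' K i s s' * v s') <= lam i * \sum_s nrm (v s)) ->
  forall c : {ffun 'I_n -> I} -> C,
  \sum_(sg : {ffun 'I_n -> I}) nrm (\sum_(tau : {ffun 'I_n -> I}) (\prod_i K i (sg i) (tau i)) * c tau)
    <= (\prod_i lam i) * \sum_(sg : {ffun 'I_n -> I}) nrm (c sg).
Proof.
elim: n K lam => [|n IH] K lam lam0 hK c.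
  have all_eq (f g : {ffun 'I_0 -> I}) : f = g by apply/ffunP => -[].
  rewrite big_ord0 mul1r le_eqVlt; apply/orP; left; apply/eqP; apply: eq_bigr => sg _.
  congr nrm; rewrite (bigD1 sg) //= big_ord0 mul1r big1 ?addr0 // => tau.
  by rewrite (all_eq tau sg) eqxx.
pose K' i := K (lift ord0 i); pose lam' i := lam (lift ord0 i).
pose d t (g : {ffun 'I_n -> I}) :=
  \sum_(h : {ffun 'I_n -> I}) (\prod_i K' i (g i) (h i)) * c (fcons t h).
have E : forall s g, \sum_(tau : {ffun 'I_n.+1 -> I}) (\prod_i K i (fcons s g i) (tau i)) * c tau =
                    \sum_t K ord0 s t * d t g.
  move=> s g; rewrite sum_ffunS; apply: eq_bigr => t _.
  rewrite /d mulr_sumr; apply: eq_bigr => h _.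
  rewrite big_ord_recl !fcons0 /K' mulrA; congr (_ * _ * _); apply: eq_bigr => i _; by rewrite !ffunE liftK.
rewrite sum_ffunS.
rewrite (eq_bigr (fun s => \sum_(g : {ffun 'I_n -> I}) nrm (\sum_t K ord0 s t * d t g))); last by move=> s _; apply: eq_bigr => g _; rewrite E.
rewrite exchange_big /=.
apply: (@le_trans _ _ (\sum_(g : {ffun 'I_n -> I}) lam ord0 * \sum_t nrm (d t g))).
  by apply: ler_sum => g _; apply: hK.
rewrite -mulr_sumr exchange_big /= big_ord_recl -mulrA.
apply: ler_wpM2l => //.
rewrite sum_ffunS mulr_sumr; apply: ler_sum => t _.
exact: (IH K' lam' (fun i => lam0 _) (fun i => hK _) (fun h => c (fcons t h))).
Qed.


Lemma innerNE (R : realType) (I : finType) (X Y : op R I) :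
  innerN X Y = (#|I|%:R)^-1 * \sum_i \sum_k (X k i)^* * Y k i.
Proof. by []. Qed.

Lemma eq_innerN (R : realType) (I : finType) (X X' Y Y' : op R I) :
  (forall x y, X x y = X' x y) -> (forall x y, Y x y = Y' x y) ->
  innerN X Y = innerN X' Y'.
Proof.
move=> hX hY; rewrite !innerNE; congr (_ * _); apply: eq_bigr => i _;
  apply: eq_bigr => k _; by rewrite hX hY.
Qed.

Lemma innerN_ge0 (R : realType) (I : finType) (X : op R I) : 0 <= innerN X X.
Proof.
rewrite innerNE mulr_ge0 ?invr_ge0 ?ler0n //.
apply: sumr_ge0 => i _; apply: sumr_ge0 => k _; rewrite mulrC; exact: mul_conjC_ge0.
Qed.

Lemma sum4 (C : nmodType) (I1 I2 I3 I4 : finType) (F : I1 -> I2 -> I3 -> I4 -> C) :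
  \sum_a \sum_b \sum_c \sum_d F a b c d = \sum_c \sum_d \sum_a \sum_b F a b c d.
Proof.
under eq_bigr => a _ do rewrite exchange_big.
under eq_bigr => a _ do under eq_bigr => c _ do rewrite exchange_big.
rewrite exchange_big; apply: eq_bigr => c _; by rewrite exchange_big.
Qed.

Lemma innerN_sum (R : realType) (I J K : finType) (c : J -> R[i]) (d : K -> R[i])
  (X : J -> op R I) (Y : K -> op R I) :
  innerN (fun x y => \sum_j c j * X j x y) (fun x y => \sum_k d k * Y k x y) =
  \sum_j \sum_k (c j)^* * d k * innerN (X j) (Y k).
Proof.
symmetry.
transitivity (#|I|%:R^-1 * \sum_j \sum_k \sum_i \sum_l (c j)^* * d k * ((X j l i)^* * Y k l i)).
  rewrite mulr_sumr; apply: eq_bigr => j _; rewrite mulr_sumr; apply: eq_bigr => k _.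
  rewrite innerNE mulrCA; congr (_ * _); rewrite !mulr_sumr; apply: eq_bigr => i _; rewrite mulr_sumr //.
rewrite innerNE sum4; congr (_ * _); apply eq_bigr => i _; apply eq_bigr => l _.
rewrite rmorph_sum /= mulr_suml; apply: eq_bigr => j _.
rewrite rmorphM /= mulr_sumr; apply: eq_bigr => k _. ring.
Qed.

Lemma CS' (C : numClosedFieldType) (I : finType) (a b : I -> C) :
  (\sum_i (a i)^* * b i) * (\sum_i (a i)^* * b i)^* <=
  (\sum_i (a i)^* * a i) * (\sum_i (b i)^* * b i).
Proof.
have e1 : \sum_i a i * (a i)^* = \sum_i (a i)^* * a i by apply: eq_bigr => i _; rewrite mulrC.
have e2 : \sum_i b i * (b i)^* = \sum_i (b i)^* * b i by apply: eq_bigr => i _; rewrite mulrC.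
by rewrite -e1 -e2; apply: CS.
Qed.

Lemma innerN_CS (R : realType) (I : finType) (X Y : op R I) :
  innerN X Y * (innerN X Y)^* <= innerN X X * innerN Y Y.
Proof.
have hN : ((#|I|%:R : R[i])^-1)^* = (#|I|%:R)^-1 by rewrite geC0_conj // invr_ge0 ler0n.
have pz (F : I -> I -> R[i]) : \sum_i \sum_k F k i = \sum_(p : I * I) F p.2 p.1 by rewrite pair_big.
rewrite !innerNE !pz rmorphM /= hN mulrACA [X in _ <= X]mulrACA.
apply: ler_wpM2l; first by rewrite mulr_ge0 // invr_ge0 ler0n.
exact: (CS' (fun p : I * I => X p.2 p.1) (fun p => Y p.2 p.1)).
Qed.


Lemma prod_sum2 (C : comPzRingType) n m (F : 'I_n -> 'I_m -> 'I_m -> C) :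
  \sum_(y1 : idx n m) \sum_(y2 : idx n m) \prod_i F i (y1 i) (y2 i) =
  \prod_i \sum_b1 \sum_b2 F i b1 b2.
Proof.
symmetry; rewrite bigA_distr_bigA; apply: eq_bigr => y1 _; by rewrite bigA_distr_bigA.
Qed.


Lemma card_idx_inv (R : realType) n m :
  ((#|idx n m|%:R : R[i])^-1) = \prod_(i < n) (m%:R)^-1.
Proof.
by rewrite card_ffun !card_ord natrX prodr_const card_ord exprVn.
Qed.

Lemma innerN_tens (R : realType) n m (X Y : 'I_n -> op R 'I_m) :
  innerN (fun x y : idx n m => \prod_i X i (x i) (y i))
         (fun x y : idx n m => \prod_i Y i (x i) (y i)) =
  \prod_i innerN (X i) (Y i).
Proof.
rewrite innerNE card_idx_inv.
transitivity ((\prod_(i < n) (m%:R)^-1) * \sum_(x : idx n m) \sum_(k : idx n m)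
   \prod_i ((X i (k i) (x i))^* * Y i (k i) (x i))).
  congr (_ * _); apply: eq_bigr => x _; apply: eq_bigr => k _.
  by rewrite rmorph_prod big_split.
rewrite (prod_sum2 (fun i b1 b2 => (X i b2 b1)^* * Y i b2 b1)) -big_split /=.
by apply: eq_bigr => i _; rewrite innerNE card_ord.
Qed.


Lemma sum_pair (C : nmodType) (I J : finType) (F : I * J -> C) :
  \sum_p F p = \sum_i \sum_j F (i, j).
Proof. by rewrite pair_big; apply: eq_bigr => -[]. Qed.

Lemma sum_ind_r (C : pzRingType) (I : finType) (j : I) (F : I -> C) :
  \sum_i F i * (i == j)%:R = F j.
Proof.
rewrite (bigD1 j) //= eqxx mulr1 big1 ?addr0 // => i /negbTE ->; by rewrite mulr0.
Qed.

Lemma Tformula (R : realType) n mA mB (psi : op R ('I_mA * 'I_mB)%type)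
  (T : op R (idx n mB) -> op R (idx n mA)) (hT : markov_op psi T) (hmA : (0 < mA)%N)
  (Q : op R (idx n mB)) x1 x2 :
  T Q x1 x2 = #|idx n mA|%:R * \sum_(y1 : idx n mB) \sum_(y2 : idx n mB)
                 Q y2 y1 * tenspow psi (x1, y1) (x2, y2).
Proof.
pose M : op R (idx n mA) := fun k i => (k == x1)%:R * (i == x2)%:R.
have := hT M Q; rewrite innerNE.
have hM k i : (M k i)^* = M k i by rewrite /M rmorphM /= !conjC_nat.
under [in RHS]eq_bigr do under eq_bigr do rewrite hM /M -mulrA.
under [in RHS]eq_bigr do rewrite sum_ind.
rewrite sum_ind => htr.
have N0 : (#|idx n mA|%:R : R[i]) != 0.
  by rewrite pnatr_eq0 -lt0n card_ffun card_ord expn_gt0 card_ord hmA.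
have -> : T Q x1 x2 = #|idx n mA|%:R * trace (mulop (tens (adj M) Q) (tenspow psi)).
  by rewrite htr mulrA mulfV // mul1r.
congr (_ * _).
rewrite /trace /mulop /tens /adj. rewrite (@sum_pair _ (idx n mA) (idx n mB)).
under eq_bigr do under eq_bigr do rewrite (@sum_pair _ (idx n mA) (idx n mB)).
transitivity (\sum_(r1 : idx n mA) (r1 == x2)%:R * \sum_(k1 : idx n mA) (k1 == x1)%:R *
   \sum_(r2 : idx n mB) \sum_(k2 : idx n mB) Q r2 k2 * tenspow psi (k1, k2) (r1, r2)).
  apply: eq_bigr => r1 _; rewrite exchange_big mulr_sumr; apply: eq_bigr => k1 _.
  rewrite mulrA mulr_sumr; apply: eq_bigr => r2 _; rewrite mulr_sumr; apply: eq_bigr => k2 _.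
  rewrite hM /M /=; ring.
rewrite sum_ind sum_ind exchange_big //.
Qed.


Lemma prodM (C : comPzRingType) (I : finType) (F G : I -> C) :
  \prod_i (F i * G i) = (\prod_i F i) * \prod_i G i.
Proof. exact: big_split. Qed.

Definition tmap (R : realType) mA mB (psi : op R ('I_mA * 'I_mB)%type) (V : op R 'I_mB)
  : op R 'I_mA :=
  fun a1 a2 => mA%:R * \sum_b1 \sum_b2 V b2 b1 * psi (a1, b1) (a2, b2).

Lemma tmapE (R : realType) mA mB (psi : op R ('I_mA * 'I_mB)%type) (V : op R 'I_mB) a1 a2 :
  tmap psi V a1 a2 = mA%:R * \sum_b1 \sum_b2 V b2 b1 * psi (a1, b1) (a2, b2).
Proof. by []. Qed.

Definition btens (R : realType) n m (F : 'I_n -> op R 'I_m) : op R (idx n m) :=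
  fun x y => \prod_i F i (x i) (y i).

Lemma card_idx (R : realType) n m :
  ((#|idx n m|%:R : R[i])) = \prod_(i < n) (m%:R).
Proof. by rewrite card_ffun !card_ord natrX prodr_const card_ord. Qed.

Lemma tenspowE (R : realType) n mA mB (psi : op R ('I_mA * 'I_mB)%type) x1 y1 x2 y2 :
  @tenspow R n mA mB psi (x1, y1) (x2, y2) = \prod_i psi (x1 i, y1 i) (x2 i, y2 i).
Proof. by []. Qed.

Lemma T_tens (R : realType) n mA mB (psi : op R ('I_mA * 'I_mB)%type)
  (T : op R (idx n mB) -> op R (idx n mA)) (hT : markov_op psi T) (hmA : (0 < mA)%N)
  (F : 'I_n -> op R 'I_mB) x1 x2 :
  T (btens F) x1 x2 = btens (fun i => tmap psi (F i)) x1 x2.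
Proof.
rewrite (Tformula hT hmA) /btens /tmap.
transitivity (#|idx n mA|%:R * \sum_(y1 : idx n mB) \sum_(y2 : idx n mB)
   \prod_i (F i (y2 i) (y1 i) * psi (x1 i, y1 i) (x2 i, y2 i))).
  congr (_ * _); apply: eq_bigr => y1 _; apply: eq_bigr => y2 _; by rewrite tenspowE prodM.

rewrite (prod_sum2 (fun i b1 b2 => F i b2 b1 * psi (x1 i, b1) (x2 i, b2))).
by rewrite card_idx -prodM.
Qed.

Lemma T_sum (R : realType) n mA mB (psi : op R ('I_mA * 'I_mB)%type)
  (T : op R (idx n mB) -> op R (idx n mA)) (hT : markov_op psi T) (hmA : (0 < mA)%N)
  (J : finType) (c : J -> R[i]) (X : J -> op R (idx n mB)) x1 x2 :
  T (fun x y => \sum_j c j * X j x y) x1 x2 = \sum_j c j * T (X j) x1 x2.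
Proof.
rewrite (Tformula hT hmA).
under [RHS]eq_bigr do rewrite (Tformula hT hmA).
transitivity (#|idx n mA|%:R * \sum_j \sum_(y1 : idx n mB) \sum_(y2 : idx n mB)
    c j * (X j y2 y1 * tenspow psi (x1, y1) (x2, y2))).
  congr (_ * _); rewrite [RHS]exchange_big; apply: eq_bigr => y1 _.
  rewrite [RHS]exchange_big; apply: eq_bigr => y2 _; rewrite mulr_suml; apply: eq_bigr => j _.
  by rewrite mulrA.
rewrite mulr_sumr; apply: eq_bigr => j _; rewrite mulrCA; congr (_ * _).
rewrite !mulr_sumr; apply: eq_bigr => y1 _; rewrite !mulr_sumr; apply: eq_bigr => y2 _.
by rewrite mulrCA.
Qed.

Lemma beta_inner (R : realType) mA mB (psi : op R ('I_mA * 'I_mB)%type) (hmA : (0 < mA)%N)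
  (P : op R 'I_mA) (V : op R 'I_mB) :
  trace (mulop (tens (adj P) V) psi) = innerN P (tmap psi V).
Proof.
rewrite innerNE /trace /mulop /tens /adj /tmap.
rewrite (@sum_pair _ 'I_mA 'I_mB).
under eq_bigr do under eq_bigr do rewrite (@sum_pair _ 'I_mA 'I_mB).
rewrite card_ord mulr_sumr; apply: eq_bigr => r1 _.
rewrite exchange_big mulr_sumr; apply: eq_bigr => k1 _.
rewrite mulrCA mulKf ?pnatr_eq0 -?lt0n // mulr_sumr.
rewrite exchange_big; apply: eq_bigr => k2 _; rewrite mulr_sumr; apply: eq_bigr => r2 _ /=.
ring.
Qed.

Lemma tmap_id (R : realType) mA mB (psi : op R ('I_mA * 'I_mB)%type) (hmA : (0 < mA)%N)
  (hA : forall a a' : 'I_mA, marginalA psi a a' = (a == a')%:R / mA%:R) a1 a2 :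
  tmap psi (@idop R 'I_mB) a1 a2 = @idop R _ a1 a2.
Proof.
rewrite /tmap /idop.
under eq_bigr do under eq_bigr => b2 _ do rewrite [(b2 == _)%:R]/=.
under eq_bigr => b1 _ do rewrite (eq_bigr (fun b2 => (b2 == b1)%:R * psi (a1, b1) (a2, b2))) // sum_ind.
have := hA a1 a2; rewrite /marginalA => ->.
by rewrite mulrCA mulfV ?pnatr_eq0 -?lt0n // mulr1.
Qed.

Lemma trace_tmap0 (R : realType) mA mB (psi : op R ('I_mA * 'I_mB)%type)
  (hB : forall b b' : 'I_mB, marginalB psi b b' = (b == b')%:R / mB%:R)
  (V : op R 'I_mB) : trace V = 0 -> trace (tmap psi V) = 0.
Proof.
move=> hV; rewrite /trace; under eq_bigr do rewrite tmapE; rewrite -mulr_sumr.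
transitivity (mA%:R * \sum_b1 \sum_b2 V b2 b1 * marginalB psi b1 b2).
  congr (_ * _); rewrite exchange_big; apply: eq_bigr => b1 _.
  rewrite exchange_big; apply: eq_bigr => b2 _; by rewrite /marginalB mulr_sumr.
under eq_bigr => b1 _ do under eq_bigr => b2 _ do rewrite hB [b1 == b2]eq_sym mulrCA.
under eq_bigr => b1 _ do rewrite sum_ind.
under eq_bigr do rewrite mulrC. by rewrite -mulr_sumr -/(trace V) hV !mulr0.
Qed.


Lemma innerN_scale (R : realType) (I : finType) (k l : R[i]) (X Y : op R I) :
  innerN (fun x y => k * X x y) (fun x y => l * Y x y) = k^* * l * innerN X Y.
Proof.
rewrite !innerNE mulrCA; congr (_ * _); rewrite !mulr_sumr; apply: eq_bigr => i _.
rewrite mulr_sumr; apply: eq_bigr => j _; rewrite rmorphM /=; ring.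
Qed.

Lemma trace_scale (R : realType) (I : finType) (k : R[i]) (X : op R I) :
  trace (fun x y => k * X x y) = k * trace X.
Proof. by rewrite /trace mulr_sumr. Qed.

Lemma tmap_scale (R : realType) mA mB (psi : op R ('I_mA * 'I_mB)%type) (k : R[i])
  (V : op R 'I_mB) a1 a2 :
  tmap psi (fun x y => k * V x y) a1 a2 = k * tmap psi V a1 a2.
Proof.
rewrite !tmapE mulrCA; congr (_ * _); rewrite mulr_sumr; apply: eq_bigr => b1 _.
rewrite mulr_sumr; apply: eq_bigr => b2 _; by rewrite mulrA.
Qed.

Lemma ge0_C (R : realType) (z : R[i]) : 0 <= z -> z = ((complex.Re z)%:C)%C.
Proof. by case: z => a b; rewrite lecE /= => /andP[/eqP -> _]. Qed.

Lemma innerN_eq0 (R : realType) (I : finType) (X : op R I) :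
  (0 < #|I|)%N -> innerN X X = 0 -> forall x y, X x y = 0.
Proof.
move=> hI; rewrite innerNE => /eqP; rewrite mulf_eq0 invr_eq0 pnatr_eq0.
have -> : (#|I| == 0)%N = false by move: hI; case: #|I|.
move=> /= /eqP h0 x y.
have g0 i k : 0 <= (X k i)^* * X k i by rewrite mulrC mul_conjC_ge0.
have h1 : \sum_k (X k y)^* * X k y = 0.
  by apply: (psumr_eq0P _ h0) => // i _; apply: sumr_ge0 => k _.
have h2 : (X x y)^* * X x y = 0 by apply: (psumr_eq0P _ h1).
by apply/eqP; rewrite -mul_conjC_eq0 mulrC h2.
Qed.

Definition Kpsi (R : realType) mA mB (psi : op R ('I_mA * 'I_mB)%type) : R[i] :=
  (mA%:R)^-1 * \sum_(i : 'I_mA) \sum_(k : 'I_mA) (mA%:R * mA%:R * mB%:R *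
     \sum_(p : 'I_mB * 'I_mB) (psi (k, p.1) (i, p.2))^* * psi (k, p.1) (i, p.2)).

Lemma tQ_bound (R : realType) mA mB (psi : op R ('I_mA * 'I_mB)%type) (Q : op R 'I_mB) :
  innerN Q Q = 1 -> innerN (tmap psi Q) (tmap psi Q) <= Kpsi psi.
Proof.
move=> hQ; rewrite innerNE /Kpsi card_ord.
apply: ler_wpM2l; first by rewrite invr_ge0 ler0n.
apply: ler_sum => i _; apply: ler_sum => k _.
have hmB : \sum_(p : 'I_mB * 'I_mB) (Q p.2 p.1)^* * Q p.2 p.1 = mB%:R.
  move: hQ; rewrite innerNE card_ord pair_big /=.
  have [->|mB0] := eqVneq (mB%:R : R[i]) 0.
    by rewrite invr0 mul0r => /eqP; rewrite eq_sym oner_eq0.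
  by move/(congr1 (fun z => mB%:R * z)); rewrite mulrA mulfV // mul1r mulr1.
rewrite !tmapE pair_big /=.
set s := \sum_p _.
have e1 : \sum_(p : 'I_mB * 'I_mB) ((Q p.2 p.1)^*)^* * psi (k, p.1) (i, p.2) = s.
  by apply: eq_bigr => p _; rewrite conjCK.
have e2 : \sum_(p : 'I_mB * 'I_mB) ((Q p.2 p.1)^*)^* * (Q p.2 p.1)^* = mB%:R.
  by rewrite -hmB; apply: eq_bigr => p _; rewrite conjCK mulrC.
have hs := CS' (fun p : 'I_mB * 'I_mB => (Q p.2 p.1)^*) (fun p => psi (k, p.1) (i, p.2)).
rewrite /= e1 e2 in hs.
have mAJ : (mA%:R : R[i])^* = mA%:R by rewrite conjC_nat.
rewrite rmorphM /= mAJ -mulrA [s^* * _]mulrC.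
rewrite -!mulrA.
apply: ler_wpM2l; first by rewrite ler0n.
apply: ler_wpM2l; first by rewrite ler0n.
exact: hs.
Qed.

Lemma corr_ub (R : realType) mA mB (psi : op R ('I_mA * 'I_mB)%type) (hmA : (0 < mA)%N) r :
  corr_values psi r -> r <= 1 + complex.Re (Kpsi psi).
Proof.
move=> [P [Q [_ _ hP hQ ->]]].
rewrite (beta_inner psi hmA).
set z := innerN P (tmap psi Q).
have h1 : `|z| ^+ 2 <= Kpsi psi.
  rewrite normCK; apply: le_trans (innerN_CS _ _) _; rewrite hP mul1r; exact: tQ_bound.
set u := complex.Re `|z|.
have hu : `|z| = (u%:C)%C by apply: ge0_C; exact: normr_ge0.
have K0 : 0 <= Kpsi psi by apply: le_trans h1; rewrite exprn_ge0 // normr_ge0.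
rewrite (ge0_C K0) hu -rmorphXn lecR in h1.
have : u <= 1 + u ^+ 2 by nra.
lra.
Qed.

Lemma corr_le (R : realType) mA mB (psi : op R ('I_mA * 'I_mB)%type) (hmA : (0 < mA)%N) r :
  corr_values psi r -> r <= maxcorr psi.
Proof.
move=> hr; apply: sup_upper_bound => //; split; first by exists r.
by exists (1 + complex.Re (Kpsi psi)) => x hx; apply: corr_ub.
Qed.

Lemma corr_ge0 (R : realType) mA mB (psi : op R ('I_mA * 'I_mB)%type) r :
  corr_values psi r -> 0 <= r.
Proof.
move=> [P [Q [_ _ _ _ ->]]].
have := normr_ge0 (trace (mulop (tens (adj P) Q) psi)).
by rewrite lecE => /andP[_].
Qed.

Lemma maxcorr_ge0 (R : realType) mA mB (psi : op R ('I_mA * 'I_mB)%type) (hmA : (0 < mA)%N) :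
  0 <= maxcorr psi.
Proof.
have [[r hr]|he] := boolp.pselect (exists r, corr_values psi r).
  by apply: le_trans (corr_le hmA hr); exact: corr_ge0 hr.
rewrite /maxcorr.
have -> : corr_values psi = set0 by apply/nonemptyPn.
by rewrite sup0.
Qed.

Lemma t_contr (R : realType) mA mB (psi : op R ('I_mA * 'I_mB)%type)
  (hmA : (0 < mA)%N) (hmB : (0 < mB)%N)
  (hB : forall b b' : 'I_mB, marginalB psi b b' = (b == b')%:R / mB%:R)
  (V : op R 'I_mB) : trace V = 0 ->
  innerN (tmap psi V) (tmap psi V) <= ((maxcorr psi ^+ 2)%:C)%C * innerN V V.
Proof.
move=> hV.
set a := complex.Re (innerN (tmap psi V) (tmap psi V)).
set b := complex.Re (innerN V V).
have ha : innerN (tmap psi V) (tmap psi V) = (a%:C)%C by apply: ge0_C; exact: innerN_ge0.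
have hb : innerN V V = (b%:C)%C by apply: ge0_C; exact: innerN_ge0.
have a0 : 0 <= a by have := innerN_ge0 (tmap psi V); rewrite ha ler0c.
have b0 : 0 <= b by have := innerN_ge0 V; rewrite hb ler0c.
rewrite ha hb -rmorphM lecR.
set rho := maxcorr psi.
have rho0 : 0 <= rho by exact: maxcorr_ge0.
have [az|anz] := eqVneq a 0.
  by rewrite az mulr_ge0 // exprn_ge0.
have apos : 0 < a by rewrite lt_def anz a0.
have [bz|bnz] := eqVneq b 0.
  exfalso; move/eqP: anz; apply.
  have hV0 : forall x y, V x y = 0.
    by apply: innerN_eq0; [rewrite card_ord | rewrite hb bz].

  have ht x y : tmap psi V x y = 0.
    rewrite tmapE big1 ?mulr0 // => b1 _; rewrite big1 // => b2 _; by rewrite hV0 mul0r.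
  rewrite /a innerNE big1 ?mulr0 // => i _; rewrite big1 // => k _; by rewrite ht mulr0.
have bpos : 0 < b by rewrite lt_def bnz b0.
set sa := Num.sqrt a; set sb := Num.sqrt b.
have sapos : 0 < sa by rewrite sqrtr_gt0.
have sbpos : 0 < sb by rewrite sqrtr_gt0.
have sa2 : a = sa ^+ 2 by rewrite sqr_sqrtr.
have sb2 : b = sb ^+ 2 by rewrite sqr_sqrtr.
have sa0 : sa != 0 by rewrite gt_eqF.
have sb0 : sb != 0 by rewrite gt_eqF.
have cJ (x : R) : 0 <= x -> ((x%:C)%C)^* = (x%:C)%C by move=> x0; rewrite geC0_conj // ler0c.
have hcv : corr_values psi (sa / sb).
  exists (fun x y => ((sa^-1)%:C)%C * tmap psi V x y).
  exists (fun x y => ((sb^-1)%:C)%C * V x y).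
  split.
  - by rewrite trace_scale trace_tmap0 // mulr0.
  - by rewrite trace_scale hV mulr0.
  - rewrite innerN_scale ha cJ ?invr_ge0 ?ltW // -!rmorphM.
    have -> : sa^-1 * sa^-1 * a = 1 by rewrite sa2; field.
    by rewrite rmorph1.
  - rewrite innerN_scale hb cJ ?invr_ge0 ?ltW // -!rmorphM.
    have -> : sb^-1 * sb^-1 * b = 1 by rewrite sb2; field.
    by rewrite rmorph1.
  - rewrite (beta_inner psi hmA).
    rewrite (@eq_innerN _ _ _ (fun x y => ((sa^-1)%:C)%C * tmap psi V x y) _
      (fun x y => ((sb^-1)%:C)%C * tmap psi V x y)) // => [|x y]; last by rewrite tmap_scale.
    rewrite innerN_scale ha cJ ?invr_ge0 ?ltW // -!rmorphM.
    have -> : sa^-1 * sb^-1 * a = sa / sb.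
      by rewrite sa2; field; rewrite sb0 sa0.
    by rewrite normc_def /= expr0n /= addr0 sqrtr_sqr ger0_norm // divr_ge0 // ltW.
have := corr_le hmA hcv; rewrite -/rho ler_pdivrMr // => h.
rewrite sa2 sb2 -exprMn; apply: lerXn2r => //; rewrite ?nnegrE ?mulr_ge0 // ltW //.
Qed.


Lemma innerN_idop (R : realType) (I : finType) (X : op R I) :
  innerN (@idop R I) X = (#|I|%:R)^-1 * trace X.
Proof.
rewrite innerNE; congr (_ * _); apply: eq_bigr => i _.
rewrite /idop (eq_bigr (fun k => (k == i)%:R * X k i)) ?sum_ind // => k _.
by rewrite conjC_nat.
Qed.

Lemma basis_trace0 (R : realType) mB (Bs : 'I_(mB * mB) -> op R 'I_mB)
  (hBs : std_basis Bs) (hmB : (0 < mB)%N) (s0 s : 'I_(mB * mB)) :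
  val s0 = 0%N -> val s != 0%N -> trace (Bs s) = 0.
Proof.
case: hBs => h0 _ horth hs0 hs.
have := horth s0 s; rewrite (h0 s0 hs0) innerN_idop.
have -> : (s0 == s) = false by apply/negbTE; apply: contraNneq hs => <-; rewrite hs0.
move/eqP; rewrite mulf_eq0 invr_eq0 pnatr_eq0 card_ord.
have -> : (mB == 0)%N = false by apply/negbTE; rewrite -lt0n.
by move=> /eqP.
Qed.

Lemma trace_sum (R : realType) (I J : finType) (c : J -> R[i]) (X : J -> op R I) :
  trace (fun x y => \sum_j c j * X j x y) = \sum_j c j * trace (X j).
Proof.
rewrite /trace exchange_big; apply: eq_bigr => j _; by rewrite mulr_sumr.
Qed.

Lemma tmap_sum (R : realType) mA mB (psi : op R ('I_mA * 'I_mB)%type) (J : finType)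
  (c : J -> R[i]) (X : J -> op R 'I_mB) a1 a2 :
  tmap psi (fun x y => \sum_j c j * X j x y) a1 a2 = \sum_j c j * tmap psi (X j) a1 a2.
Proof.
rewrite tmapE.
under [RHS]eq_bigr do rewrite tmapE mulrCA.
rewrite -mulr_sumr; congr (_ * _).
transitivity (\sum_j \sum_b1 \sum_b2 c j * (X j b2 b1 * psi (a1, b1) (a2, b2))); last first.
  apply: eq_bigr => j _; rewrite mulr_sumr; apply: eq_bigr => b1 _; by rewrite mulr_sumr.
rewrite [RHS]exchange_big; apply: eq_bigr => b1 _.
rewrite [RHS]exchange_big; apply: eq_bigr => b2 _.
rewrite mulr_suml; apply: eq_bigr => j _; by rewrite mulrA.
Qed.

Lemma htilde_bound (R : realType) mA mB (psi : op R ('I_mA * 'I_mB)%type)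
  (hmA : (0 < mA)%N) (hmB : (0 < mB)%N)
  (hB : forall b b' : 'I_mB, marginalB psi b b' = (b == b')%:R / mB%:R)
  (Bs : 'I_(mB * mB) -> op R 'I_mB) (hBs : std_basis Bs)
  (s0 : 'I_(mB * mB)) (hs0 : val s0 = 0%N) (v : 'I_(mB * mB) -> R[i]) :
  \sum_s nrm (\sum_s' ((val s != 0%N) && (val s' != 0%N))%:R *
        innerN (tmap psi (Bs s)) (tmap psi (Bs s')) * v s')
  <= ((maxcorr psi ^+ 4)%:C)%C * \sum_s nrm (v s).
Proof.
set h := fun s s' => innerN (tmap psi (Bs s)) (tmap psi (Bs s')).
set w := fun s => \sum_s' ((val s != 0%N) && (val s' != 0%N))%:R * h s s' * v s'.
rewrite -/(w _).
have -> : \sum_s nrm (w s) = \sum_s nrm (w s) by [].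
set v' := fun s => (val s != 0%N)%:R * v s.
set W := fun x y => \sum_s w s * Bs s x y.
set Vo := fun x y => \sum_s v' s * Bs s x y.
have wz s : val s = 0%N -> w s = 0.
  move=> hs; rewrite /w big1 // => s' _; by rewrite hs eqxx /= !mul0r.
have trW : trace W = 0.
  rewrite trace_sum big1 // => s _; have [hs|hs] := eqVneq (val s) 0%N.
    by rewrite wz // mul0r.
  by rewrite (basis_trace0 hBs hmB hs0 hs) mulr0.
have trV : trace Vo = 0.
  rewrite trace_sum big1 // => s _; have [hs|hs] := eqVneq (val s) 0%N.
    by rewrite /v' hs eqxx mul0r mul0r.
  by rewrite (basis_trace0 hBs hmB hs0 hs) mulr0.
case: (hBs) => _ _ horth.
set G := \sum_s nrm (w s).
have G0 : 0 <= G by apply: sumr_ge0 => s _; exact: nrm_ge0.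
have C1 : G = innerN (tmap psi W) (tmap psi Vo).
  rewrite (@eq_innerN _ _ _ (fun x y => \sum_s w s * tmap psi (Bs s) x y) _
      (fun x y => \sum_s v' s * tmap psi (Bs s) x y)); last 2 first.
  - by move=> x y; rewrite tmap_sum.
  - by move=> x y; rewrite tmap_sum.
  rewrite innerN_sum /G; apply: eq_bigr => s _.
  rewrite /nrm mulrC {2}/w mulr_sumr; apply: eq_bigr => s' _.
  have [hs|hs] := eqVneq (val s) 0%N; first by rewrite wz // conjC0 !mul0r.
  rewrite /v' /=; rewrite -[innerN _ _]/(h s s'); ring.
have C2 : innerN W W = G.
  rewrite innerN_sum /G; apply: eq_bigr => s _.
  rewrite (eq_bigr (fun s' => (w s)^* * w s' * (s' == s)%:R)); last first.
    by move=> s' _; rewrite horth eq_sym.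
  by rewrite sum_ind_r /nrm mulrC.
have C3 : innerN Vo Vo <= \sum_s nrm (v s).
  rewrite innerN_sum; apply: ler_sum => s _.
  rewrite (eq_bigr (fun s' => (v' s)^* * v' s' * (s' == s)%:R)); last first.
    by move=> s' _; rewrite horth eq_sym.
  rewrite sum_ind_r /v' /nrm; case: (val s != 0%N); rewrite ?conjC1 ?conjC0 ?mul1r ?mul0r.
    by rewrite mulrC.
  by rewrite mulr0 mul_conjC_ge0.
have rho2 : 0 <= ((maxcorr psi ^+ 2)%:C)%C :> R[i] by rewrite ler0c exprn_ge0 // maxcorr_ge0.
have key : G * G <= (((maxcorr psi ^+ 2)%:C)%C * G) * (((maxcorr psi ^+ 2)%:C)%C * \sum_s nrm (v s)).
  have -> : G * G = G * G^* by rewrite geC0_conj.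
  rewrite {1 2}C1; apply: le_trans (innerN_CS _ _) _.
  apply: ler_pM; rewrite ?innerN_ge0 //.
    by rewrite -C2; apply: t_contr.
  apply: le_trans (t_contr hmA hmB hB trV) _.
  by apply: ler_wpM2l.
have [Gz|Gnz] := eqVneq G 0.
  by rewrite Gz mulr_ge0 // ?ler0c ?exprn_ge0 ?maxcorr_ge0 // sumr_ge0 // => s _; exact: nrm_ge0.
have Gpos : 0 < G by rewrite lt_def Gnz G0.
have e4 : ((maxcorr psi ^+ 4)%:C)%C = ((maxcorr psi ^+ 2)%:C)%C * ((maxcorr psi ^+ 2)%:C)%C :> R[i].
  by rewrite -rmorphM -exprD.
rewrite e4; rewrite -(ler_pM2l Gpos).
apply: (le_trans key); rewrite le_eqVlt; apply/orP; left; apply/eqP; ring.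
Qed.


Lemma h00 (R : realType) mA mB (psi : op R ('I_mA * 'I_mB)%type) (hmA : (0 < mA)%N)
  (hA : forall a a' : 'I_mA, marginalA psi a a' = (a == a')%:R / mA%:R)
  (Bs : 'I_(mB * mB) -> op R 'I_mB) (hBs : std_basis Bs) (s s' : 'I_(mB * mB)) :
  val s = 0%N -> val s' = 0%N ->
  innerN (tmap psi (Bs s)) (tmap psi (Bs s')) = 1.
Proof.
case: hBs => h0 _ _ hs hs'; rewrite (h0 s hs) (h0 s' hs').
rewrite (@eq_innerN _ _ _ (@idop R 'I_mA) _ (@idop R 'I_mA)); last 2 first.
- by move=> x y; rewrite tmap_id.
- by move=> x y; rewrite tmap_id.
rewrite innerN_idop /trace /idop.
rewrite (eq_bigr (fun _ => 1)); last by move=> i _; rewrite eqxx.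
by rewrite sumr_const mulVf // card_ord pnatr_eq0 -lt0n.
Qed.

Lemma prod_delta (R : realType) n k (sg tau : {ffun 'I_n -> 'I_k}) :
  \prod_i ((sg i == tau i)%:R : R[i]) = (sg == tau)%:R.
Proof.
have [->|ne] := eqVneq sg tau.
  by rewrite big1 // => i _; rewrite eqxx.
have [i hi] : exists i, sg i != tau i.
  apply/existsP; move: ne; apply: contraNT; rewrite negb_exists => /forallP h.
  by apply/eqP/ffunP => i; move: (h i); rewrite negbK => /eqP.
by rewrite (bigD1 i) //= (negbTE hi) mul0r.
Qed.

Lemma nonS_bound (R : realType) k (s0 : 'I_k) (hs0 : val s0 = 0%N) (v : 'I_k -> R[i]) :
  \sum_(s : 'I_k) nrm (\sum_(s' : 'I_k) ((val s == 0%N) && (val s' == 0%N))%:R * v s')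
  <= 1 * \sum_(s : 'I_k) nrm (v s).
Proof.
have e (s : 'I_k) : (val s == 0%N) = (s == s0).
  by apply/eqP/eqP => [h|->//]; apply: val_inj; rewrite /= h hs0.
under eq_bigr => s _ do under eq_bigr => s' _ do rewrite !e -mulnb natrM -mulrA.
under eq_bigr => s _ do rewrite -mulr_sumr sum_ind.
rewrite /nrm.
under eq_bigr => s _ do rewrite rmorphM /= conjC_nat mulrACA.
rewrite (eq_bigr (fun s => (s == s0)%:R * (v s0 * (v s0)^*))); last first.
  by move=> s _; case: (s == s0); rewrite ?mul1r ?mul0r.
rewrite sum_ind mul1r (bigD1 s0) //= lerDl.
by apply: sumr_ge0 => s _; exact: mul_conjC_ge0.
Qed.

Unset Implicit Arguments.

Theorem proposition3p13 (R : realType) (n mA mB : nat)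
  (hn : (0 < n)%N) (hmA : (0 < mA)%N) (hmB : (0 < mB)%N)
  (psi : op R ('I_mA * 'I_mB)%type)
  (hpsi : density psi)
  (hA : forall a a' : 'I_mA, marginalA psi a a' = (a == a')%:R / mA%:R)
  (hB : forall b b' : 'I_mB, marginalB psi b b' = (b == b')%:R / mB%:R)
  (T : op R (idx n mB) -> op R (idx n mA))
  (hT : markov_op psi T)
  (Bs : 'I_(mB * mB) -> op R 'I_mB)
  (hBs : std_basis Bs)
  (Q : op R (idx n mB)) (S : {set 'I_n}) :
  norm2 (T (es_comp Bs Q S)) <= maxcorr psi ^+ #|S| * norm2 (es_comp Bs Q S).
Proof.
have hk : (0 < mB * mB)%N by rewrite muln_gt0 hmB.
pose s0 : 'I_(mB * mB) := Ordinal hk.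
have hs0 : val s0 = 0%N by [].
pose c (sg : {ffun 'I_n -> 'I_(mB * mB)}) : R[i] :=
  ([set i | val (sg i) != 0%N] == S)%:R * innerN (basis_tens Bs sg) Q.
set Z := es_comp Bs Q S.
have hZ x y : Z x y = \sum_sg c sg * basis_tens Bs sg x y.
  rewrite /Z /es_comp big_mkcond /=; apply: eq_bigr => sg _.
  by rewrite /c; case: eqP; rewrite ?mul1r ?mul0r.
have eZ : Z = (fun x y => \sum_sg c sg * basis_tens Bs sg x y).
  by apply: boolp.funext => x; apply: boolp.funext => y; exact: hZ.
pose h s s' := innerN (tmap psi (Bs s)) (tmap psi (Bs s')).
have hTZ x y : T Z x y = \sum_sg c sg * btens (fun i => tmap psi (Bs (sg i))) x y.
  rewrite eZ (T_sum hT hmA); apply: eq_bigr => sg _; congr (_ * _).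
  exact: (T_tens hT hmA (fun i => Bs (sg i))).
set q := innerN (T Z) (T Z).
set W := innerN Z Z.
have hq : q = \sum_sg \sum_tau (c sg)^* * c tau * \prod_i h (sg i) (tau i).
  rewrite /q (eq_innerN hTZ hTZ) innerN_sum; apply: eq_bigr => sg _; apply: eq_bigr => tau _.
  by congr (_ * _); exact: (innerN_tens (fun i => tmap psi (Bs (sg i))) (fun i => tmap psi (Bs (tau i)))).

have hW : W = \sum_sg nrm (c sg).
  rewrite /W (eq_innerN hZ hZ) innerN_sum; apply: eq_bigr => sg _.
  rewrite (eq_bigr (fun tau => (c sg)^* * c tau * (tau == sg)%:R)); last first.
    move=> tau _; congr (_ * _).
    rewrite (innerN_tens (fun i => Bs (sg i)) (fun i => Bs (tau i))).
    case: (hBs) => _ _ horth.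
    by under eq_bigr do rewrite horth; rewrite prod_delta eq_sym.
  by rewrite sum_ind_r /nrm mulrC.
pose K (i : 'I_n) (s s' : 'I_(mB * mB)) : R[i] :=
  if i \in S then ((val s != 0%N) && (val s' != 0%N))%:R * h s s'
  else ((val s == 0%N) && (val s' == 0%N))%:R.
pose r4 : R[i] := ((maxcorr psi ^+ 4)%:C)%C.
pose lam (i : 'I_n) : R[i] := if i \in S then r4 else 1.
have rho0 : 0 <= maxcorr psi by exact: maxcorr_ge0.
have lam0 i : 0 <= lam i.
  by rewrite /lam; case: ifP => _; rewrite ?ler0c ?exprn_ge0 // ler01.
have hK i (v : 'I_(mB * mB) -> R[i]) :
    \sum_s nrm (\sum_s' K i s s' * v s') <= lam i * \sum_s nrm (v s).
  rewrite /K /lam; case: ifP => _; [exact: (htilde_bound hmA hmB hB hBs hs0) | exact: (nonS_bound hs0)].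
have hKc := @tens_bound _ _ n K lam lam0 hK c.
have hL : \prod_i lam i = r4 ^+ #|S| by rewrite /lam -big_mkcond /= prodr_const.
rewrite hL in hKc.
have hq' : q = \sum_sg (c sg)^* * \sum_(tau : {ffun 'I_n -> 'I_(mB * mB)}) (\prod_i K i (sg i) (tau i)) * c tau.
  rewrite hq; apply: eq_bigr => sg _; rewrite mulr_sumr; apply: eq_bigr => tau _.
  have [hsg|hsg] := eqVneq [set i | val (sg i) != 0%N] S; last first.
    have -> : c sg = 0 by rewrite /c (negbTE hsg) mul0r.
    by rewrite conjC0 !mul0r.
  have [htau|htau] := eqVneq [set i | val (tau i) != 0%N] S; last first.
    have -> : c tau = 0 by rewrite /c (negbTE htau) mul0r.
    by rewrite !mulr0 !mul0r ?mulr0.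
  rewrite -mulrA; congr (_ * _); rewrite mulrC; congr (_ * _).
  apply: eq_bigr => i _.
  have e1 : (i \in S) = (val (sg i) != 0%N) by rewrite -hsg inE.
  have e2 : (i \in S) = (val (tau i) != 0%N) by rewrite -htau inE.
  rewrite /K; case: ifP => hi.
    by rewrite -e1 -e2 hi /= mul1r.
  move: e1 e2; rewrite hi => /esym/negbFE/eqP e1 /esym/negbFE/eqP e2.
  rewrite e1 e2 eqxx /=; exact: (h00 hmA hA hBs e1 e2).
have hcs := CS c (fun sg => \sum_(tau : {ffun 'I_n -> 'I_(mB * mB)}) (\prod_i K i (sg i) (tau i)) * c tau).
rewrite -hq' in hcs.
have q0 : 0 <= q by exact: innerN_ge0.
have W0 : 0 <= W by exact: innerN_ge0.
rewrite (geC0_conj q0) in hcs.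
have hW' : \sum_sg c sg * (c sg)^* = W by rewrite hW.
rewrite hW' in hcs.
pose L : R[i] := ((maxcorr psi ^+ (2 * #|S|))%:C)%C.
have L0 : 0 <= L by rewrite ler0c exprn_ge0.
have r4L : r4 ^+ #|S| = L ^+ 2.
  rewrite /r4 /L -!rmorphXn /= -!exprM; congr ((_ ^+ _)%:C)%C.
  by rewrite mulnAC.
have hq2 : q ^+ 2 <= (L * W) ^+ 2.
  rewrite expr2 (le_trans hcs) //.
  rewrite -hW in hKc.
  apply: le_trans (ler_wpM2l W0 hKc) _.
  rewrite exprMn -r4L le_eqVlt; apply/orP; left; apply/eqP; ring.
have hqLW : q <= L * W.
  have hx : q \is Num.nneg by rewrite nnegrE.
  have hy : L * W \is Num.nneg by rewrite nnegrE mulr_ge0.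
  by move: hq2; rewrite (ler_sqr hx hy).
rewrite (ge0_C q0) (ge0_C W0) /L -rmorphM lecR in hqLW.
rewrite /norm2 -/q -/W.
apply: le_trans (ler_wsqrtr hqLW) _.
rewrite sqrtrM ?exprn_ge0 // mulnC exprM sqrtr_sqr ger0_norm ?exprn_ge0 //.
Qed.
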